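(* Let $\Delta\geq 2$ be an integer and let $G$ be a connected bipartite graph of maximum degree at most $\Delta$. Then $$\alpha(G)\geq \frac{1}{2}\left(1+\frac{1}{2(\Delta-1)}\right)\mathrm{diss}(G)-\frac{1}{2(\Delta-1)}.$$
   Context: All graphs are finite, simple and undirected. $\alpha(G)$ is the independence number. A set $D$ of vertices is a dissociation set if the induced subgraph $G[D]$ has maximum degree at most $1$; $\mathrm{diss}(G)$ is the maximum order of a dissociation set. *)

(* Defs.v *)
From mathcomp Require Import all_boot all_order all_algebra.
Set Implicit Arguments. Unset Strict Implicit. Unset Printing Implicit Defensive.

Definition simple_graph (T : finType) (e : rel T) : Prop :=
  symmetric e /\ irreflexive e.

Definition nbhd (T : finType) (e : rel T) (v : T) : {set T} := [set u | e v u].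
Definition deg (T : finType) (e : rel T) (v : T) : nat := #|nbhd e v|.

Definition max_deg_le (T : finType) (e : rel T) (D : nat) : Prop :=
  forall v : T, deg e v <= D.

Definition connected_graph (T : finType) (e : rel T) : Prop :=
  #|T| > 0 /\ forall x y : T, connect e x y.

Definition bipartite (T : finType) (e : rel T) : Prop :=
  exists c : T -> bool, forall x y, e x y -> c x != c y.

Definition independent (T : finType) (e : rel T) (S : {set T}) : bool :=
  [forall x in S, forall y in S, ~~ e x y].

Definition dissociation (T : finType) (e : rel T) (D : {set T}) : bool :=
  [forall v in D, #|nbhd e v :&: D| <= 1].

Definition alpha (T : finType) (e : rel T) : nat :=
  \max_(S : {set T} | independent e S) #|S|.
Definition diss (T : finType) (e : rel T) : nat :=
  \max_(D : {set T} | dissociation e D) #|D|.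

(* Main.v *)
Require Import Defs.
From mathcomp Require Import all_boot all_order all_algebra.
From mathcomp Require Import zify.
Import GRing.Theory Num.Theory.

Set Implicit Arguments.
Unset Strict Implicit.
Fixpoint ball (T : finType) (e : rel T) (r : T) (k : nat) : {set T} :=
  match k with
  | 0 => [set r]
  | k'.+1 => ball e r k' :|: [set v | [exists u in ball e r k', e u v]]
  end.

Lemma ball_path (T : finType) (e : rel T) (r : T) p x k :
  path e x p -> x \in ball e r k -> last x p \in ball e r (k + size p).
Proof.
elim: p x k => [|y p IH] x k /=; first by rewrite addn0.
move/andP=> [exy pp] xb; rewrite addnS -addSn; apply: IH pp _.
rewrite /= !inE; apply/orP; right; apply/exists_inP; by exists x.
Qed.

Lemma rank_exists (T : finType) (e : rel T) (r : T) :
  symmetric e -> (forall v, connect e r v) ->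
  exists f : T -> nat, forall v, v != r -> exists u, e v u && (f u < f v).
Proof.
move=> sym Hc.
have Hex : forall v, exists k, v \in ball e r k.
  move=> v; have /connectP [p pp ->] := Hc v.
  exists (0 + size p); apply: ball_path pp _; by rewrite /= inE.
exists (fun v => ex_minn (Hex v)) => v vr.
case: ex_minnP => m vm minm.
case: m vm minm => [|k] /=; first by rewrite inE (negbTE vr).
rewrite !inE => /orP [vk|/exists_inP [u uk euv]] minm;
  first by have := minm _ vk; rewrite ltnn.
exists u; rewrite sym euv /=.
have : ex_minn (Hex u) <= k by case: ex_minnP => m' _; apply.
by [].
Qed.

Lemma diss_bound (T : finType) (e : rel T) (Delta : nat) (D : {set T}) :
  symmetric e -> (forall x y, connect e x y) -> max_deg_le e Delta ->
  dissociation e D ->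
  (#|D| <= 2 * ((Delta - 1) * #|~: D|) + 2)%N.
Proof.
move=> sym Hc Hdeg HD.
case: (set_0Vmem D) => [-> | [r rD]]; first by rewrite cards0.
have [f Hf] := rank_exists sym (Hc r).
pose p v := odflt v [pick u | e v u && (f u < f v)].
have Hp : forall v, v != r -> e v (p v) && (f (p v) < f v).
  move=> v /Hf [u Hu]; rewrite /p; case: pickP => [w -> //|/(_ u)].
  by rewrite Hu.
have HDv : forall v a b, v \in D -> a \in D -> b \in D -> e v a -> e v b -> a = b.
  move=> v a b vD aD bD ea eb.
  move/forall_inP: HD => /(_ v vD) /card_le1_eqP; apply;
    by rewrite !inE ?ea ?eb ?aD ?bD.
pose X := [set v in D | (v != r) && (p v \in D)].
pose Y := [set v in D | (v != r) && (p v \notin D)].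
have HD1 : (#|D| <= (#|X| + #|Y|).+1)%N.
  apply: (@leq_trans #|r |: (X :|: Y)|).
    apply: subset_leq_card; apply/subsetP => v vD; rewrite !inE vD /=.
    by case: (v == r); case: (p v \in D).
  rewrite cardsU1 -(cardsUI X Y); have := leq_b1 (r \notin X :|: Y); lia.
have HX : (#|X| + #|X| <= #|D|)%N.
  have inj : {in X &, injective p}.
    move=> v w; rewrite !inE => /and3P [vD vr pvD] /and3P [wD wr pwD] pe.
    have /andP [ev _] := Hp v vr; have /andP [ew _] := Hp w wr.
    apply: (HDv (p v)) => //; first by rewrite sym.
    by rewrite pe sym.
  have dis : X :&: p @: X = set0.
    apply/setP => v; rewrite inE [v \in set0]inE; apply/negP.
    move=> /andP [vX /imsetP [w wX vpw]].
    move: (vX) (wX); rewrite !inE => /and3P [vD vr pvD] /and3P [wD wr pwD].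
    have /andP [ev fv] := Hp v vr; have /andP [ew fw] := Hp w wr.
    have wpv : w = p v.
      apply: (HDv v) => //; by rewrite // vpw sym.
    rewrite -vpw in fw; rewrite -wpv in fv.
    by have := ltn_trans fw fv; rewrite ltnn.
  rewrite -{2}(card_in_imset inj) -cardsUI dis cards0 addn0.
  apply: subset_leq_card; apply/subsetP => v; rewrite inE => /orP [|/imsetP [w]].
    by rewrite inE => /andP [].
  by move=> wX ->; move: wX; rewrite inE => /and3P [].
have HY : (#|Y| <= (Delta - 1) * #|~: D|)%N.
  rewrite -sum1_card (partition_big p (mem (~: D))) => [|v]; last first.
    by rewrite !inE => /and3P [_ _ ->].
  rewrite mulnC -sum_nat_const; apply: leq_sum => u uS.
  rewrite sum1dep_card.
  have ur : u != r by apply/negP => /eqP urr; move: uS; rewrite !inE urr rD.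
  have /andP [eu fu] := Hp u ur.
  apply: (@leq_trans #|nbhd e u :\ p u|).
    apply: subset_leq_card; apply/subsetP => i; rewrite !inE.
    move=> /andP [/and3P [iD ir _] /eqP piu].
    have /andP [ei fi] := Hp i ir.
    rewrite -piu sym ei andbT; apply/negP => /eqP ipu.
    rewrite piu in ipu; rewrite -ipu in fu; rewrite piu in fi.
    by have := ltn_trans fu fi; rewrite ltnn.
  have := Hdeg u; rewrite /deg (cardsD1 (p u)) inE eu.
  by rewrite add1n => /(leq_sub2r 1); rewrite subn1.
lia.
Qed.

From mathcomp Require Import ring.
Local Open Scope ring_scope.

Theorem proposition1 (Delta : nat) (T : finType) (e : rel T) :
  (2 <= Delta)%N ->
  simple_graph e ->
  connected_graph e ->
  bipartite e ->
  max_deg_le e Delta ->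
  (alpha e)%:R >=
    (1 / 2 : rat) * (1 + 1 / (2 * (Delta%:R - 1))) * (diss e)%:R
    - 1 / (2 * (Delta%:R - 1)).
Proof.
move=> HDelta [sym irr] [_ Hc] [c Hcol] Hdeg.
have [D HD Hm] : exists2 D, dissociation e D & diss e = #|D|.
  have [|D DD Hm] := @eq_bigmax_cond _ (dissociation e) (fun D => #|D|).
    apply/card_gt0P; exists set0; rewrite unfold_in.
    by apply/forall_inP => v; rewrite inE.
  by exists D.
have Hb := diss_bound sym Hc Hdeg HD.
have Ha : (#|T| <= 2 * alpha e)%N.
  pose A := [set x | c x].
  have indA : independent e A.
    apply/forall_inP => x xA; apply/forall_inP => y yA; apply/negP => exy.
    by have := Hcol x y exy; move: xA yA; rewrite !inE => -> ->.
  have indB : independent e (~: A).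
    apply/forall_inP => x xA; apply/forall_inP => y yA; apply/negP => exy.
    by have := Hcol x y exy; move: xA yA; rewrite !inE => /negbTE -> /negbTE ->.
  have h1 : (#|A| <= alpha e)%N by exact: (@leq_bigmax_cond _ (independent e) (fun S => #|S|) _ indA).
  have h2 : (#|~: A| <= alpha e)%N by exact: (@leq_bigmax_cond _ (independent e) (fun S => #|S|) _ indB).
  by rewrite -(cardsC A); lia.
have HT := cardsC D.
rewrite -Hm in Hb HT.
set a := alpha e in Ha *; set dd := diss e in Hb HT *.
set s := #|~: D| in Hb HT.
have [d Hd] : exists d, Delta = d.+2 :> nat by exists (Delta - 2)%N; lia.
have key : (2 * d.+1 * dd + dd <= 4 * d.+1 * a + 2)%N.
  rewrite Hd subSS subn0 in Hb.
  have h : (2 * d.+1 * (dd + s) <= 2 * d.+1 * (2 * a))%N.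
    by rewrite leq_mul2l HT Ha orbT.
  nia.
have -> : (Delta%:R - 1 : rat) = d.+1%:R by rewrite Hd -addn1 natrD addrK.
have -> : (1 / 2 : rat) * (1 + 1 / (2 * d.+1%:R)) * dd%:R - 1 / (2 * d.+1%:R)
        = ((2 * d.+1 * dd + dd)%N%:R - 2) / (4 * d.+1)%N%:R.
  rewrite !natrM natrD; field.
  by rewrite addrC natr1 pnatr_eq0.
rewrite ler_pdivrMr ?ltr0n ?muln_gt0 //.
rewrite lerBlDr -natrM -[2 : rat]/(2%:R) -natrD ler_nat.
lia.
Qed.
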